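(* Under the standing setting and assumptions (A1)–(A3) described in the context, assume $\mathrm{int}\,\mathcal X_+\cap\mathcal M\neq\emptyset$. Then for every $\varepsilon>0$ the map $\mathcal R_\varepsilon$ is lower semicontinuous at every point of $\mathcal X$.
   Context: Let $\mathcal X$ be a Hausdorff, first countable, locally convex topological vector space over $\mathbb R$, partially ordered by a partial order $\geq$ with positive cone $\mathcal X_+=\{X\in\mathcal X: X\geq 0\}$. Let $\mathcal M\subset\mathcal X$ be a vector subspace with $1<\dim\mathcal M<\infty$, carrying the relative topology, and let $\pi:\mathcal M\to\mathbb R$ be linear. Standing assumptions: (A1) there is $U\in\mathcal M\cap\mathcal X_+$ with $\pi(U)=1$; (A2) $\mathcal A\subsetneq\mathcal X$ is closed, contains $0$, and satisfies $\mathcal A+\mathcal X_+\subset\mathcal A$; (A3) the map $\rho(X)=\inf\{\pi(Z): Z\in\mathcal M,\ X+Z\in\mathcal A\}$ is finitely valued and continuous on $\mathcal X$. For $\varepsilon>0$, $\mathcal R_\varepsilon(X)=\{Z\in\mathcal M: X+Z\in\mathcal A,\ \pi(Z)<\rho(X)+\varepsilon\}$. $\mathrm{int}$ denotes interior in $\mathcal X$. A set-valued map $\mathcal S:\mathcal X\rightrightarrows\mathcal M$ is lower semicontinuous at $X$ if for every open $\mathcal U\subset\mathcal M$ with $\mathcal S(X)\cap\mathcal U\neq\emptyset$ there is an open neighborhood $\mathcal U_X$ of $X$ with $\mathcal S(Y)\cap\mathcal U\neq\emptyset$ for all $Y\in\mathcal U_X$. *)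

(* Defs.v *)
From HB Require Import structures.
From mathcomp Require Import all_boot all_order all_algebra.
From mathcomp Require Import all_classical all_reals all_analysis.
Set Implicit Arguments. Unset Strict Implicit. Unset Printing Implicit Defensive.
Import Order.TTheory GRing.Theory Num.Theory.
Local Open Scope classical_set_scope.
Local Open Scope ring_scope.

Section Defs.
Context {R : realType} {E : tvsType R}.

Definition first_countable : Prop :=
  forall x : E, exists B : nat -> set E,
    (forall n, open (B n) /\ B n x) /\
    (forall U, nbhs x U -> exists n, B n `<=` U).

Definition vector_partial_order (le : E -> E -> Prop) : Prop :=
  [/\ (forall x, le x x),
      (forall x y, le x y -> le y x -> x = y),
      (forall x y z, le x y -> le y z -> le x z),
      (forall x y z, le x y -> le (x + z) (y + z)) &
      (forall (a : R) x y, 0 <= a -> le x y -> le (a *: x) (a *: y))].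

Definition pos_cone (le : E -> E -> Prop) : set E := [set x | le 0 x].

Definition subspace_of_dim (M : set E) (n : nat) : Prop :=
  exists b : 'I_n -> E,
    (forall c : 'I_n -> R, \sum_(i < n) c i *: b i = 0 -> forall i, c i = 0) /\
    M = [set x | exists c : 'I_n -> R, x = \sum_(i < n) c i *: b i].

(* pi : M -> R linear (only its values on M matter) *)
Definition linear_on (M : set E) (pi : E -> R) : Prop :=
  (forall x y, M x -> M y -> pi (x + y) = pi x + pi y) /\
  (forall (a : R) x, M x -> pi (a *: x) = a * pi x).

Definition rho_e (M : set E) (pi : E -> R) (A : set E) (X : E) : \bar R :=
  ereal_inf [set (pi Z)%:E | Z in [set Z | M Z /\ A (X + Z)]].

Definition R_eps (M : set E) (pi : E -> R) (A : set E) (eps : R) (X : E) : set E :=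
  [set Z | [/\ M Z, A (X + Z) & ((pi Z)%:E < rho_e M pi A X + eps%:E)%E]].

Definition lsc_at (M : set E) (S : E -> set E) (X : E) : Prop :=
  forall U : set E, (exists V : set E, open V /\ U = V `&` M) ->
    S X `&` U !=set0 ->
    exists W : set E, [/\ open W, W X & forall Y, W Y -> S Y `&` U !=set0].

End Defs.

(* Main.v *)
Require Import Defs.
From HB Require Import structures.
From mathcomp Require Import all_boot all_order all_algebra.
From mathcomp Require Import all_classical all_reals all_analysis.
From mathcomp Require Import lra.
Import Order.TTheory GRing.Theory Num.Theory.
Local Open Scope classical_set_scope.
Local Open Scope ring_scope.
Section H.
Context {R : realType} {E : tvsType R}.

Lemma tvs_cvgD {T} (F : set_system T) {FF : Filter F} (f g : T -> E) a b :
  f @ F --> a -> g @ F --> b -> (fun x => f x + g x) @ F --> a + b.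
Proof.
move=> fa gb; apply: (@continuous2_cvg _ _ _ _ _ _ f g (fun u v => u + v)) => //.
by have := @add_continuous _ (a, b); apply.
Qed.

Lemma tvs_cvgZ {T} (F : set_system T) {FF : Filter F} (s : T -> R^o) (f : T -> E) (k : R^o) (a : E) :
  s @ F --> k -> f @ F --> a -> (fun x => s x *: f x) @ F --> k *: a.
Proof.
move=> fa gb; apply: (@continuous2_cvg _ _ _ _ _ _ s f (fun u v => u *: v)) => //.
by have := @scale_continuous _ _ (k, a); apply.
Qed.

Lemma tvs_cvgN {T} (F : set_system T) {FF : Filter F} (f : T -> E) a :
  f @ F --> a -> (fun x => - f x) @ F --> - a.
Proof.
move=> fa; have -> : (fun x => - f x) = (fun x => (-1 : R^o) *: f x).
  by apply: funext => x; rewrite scaleN1r.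
rewrite -[X in _ --> X]scaleN1r; apply: tvs_cvgZ => //; exact: cvg_cst.
Qed.
End H.

Lemma subspace_closed {R : realType} {E : tvsType R} (M : set E) n :
  subspace_of_dim M n ->
  (forall x y, M x -> M y -> M (x + y)) /\ (forall (a : R) x, M x -> M (a *: x)).
Proof.
move=> [b [_ ->]]; split.
  move=> x y [c ->] [d ->]; exists (fun i => c i + d i).
  by rewrite -big_split /=; apply: eq_bigr => i _; rewrite scalerDl.
move=> a x [c ->]; exists (fun i => a * c i).
by rewrite scaler_sumr; apply: eq_bigr => i _; rewrite scalerA.
Qed.

Theorem mainTheorem19 (R : realType) (E : tvsType R)
  (le : E -> E -> Prop) (M : set E) (n : nat) (pi : E -> R) (A : set E) :
  hausdorff_space E ->
  first_countable (E := E) ->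
  vector_partial_order le ->
  subspace_of_dim M n -> (1 < n)%N ->
  linear_on M pi ->
  (* (A1) *)
  (exists U, [/\ M U, pos_cone le U & pi U = 1]) ->
  (* (A2) *)
  closed A -> A 0 -> A != setT ->
  (forall a p, A a -> pos_cone le p -> A (a + p)) ->
  (* (A3) *)
  (forall X, rho_e M pi A X \is a fin_num) ->
  continuous (fun X : E => (fine (rho_e M pi A X) : R^o)) ->
  (* int X_+ meets M *)
  (exists U, M U /\ interior (pos_cone le) U) ->
  forall eps : R, 0 < eps ->
  forall X : E, lsc_at M (R_eps M pi A eps) X.
Proof.
move=> _ _ [_ _ _ _ leZ] /subspace_closed [MD MZ] _ [piD piZ] _ _ _ _ Amono rfin rcont
  [P [MP PI]] eps eps0 X.
move=> U [V [Vo ->]] [Z [[MZ' AZ hZ] [VZ _]]].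
set r := fun Y => fine (rho_e M pi A Y).
have rE Y : rho_e M pi A Y = (r Y)%:E by rewrite /r fineK.
move: hZ; rewrite rE -EFinD lte_fin => hZ.
set eta := r X + eps - pi Z.
have eta0 : 0 < eta by rewrite /eta subr_gt0.
have h1 : \forall d \near (0 : R^o), V (Z + d *: P).
  have : (fun d : R^o => Z + d *: P) @ (0 : R^o) --> Z.
    rewrite -[X in _ --> X]addr0 -[X in _ --> (_ + X)](scale0r P).
    apply: tvs_cvgD; first exact: cvg_cst.
    apply: tvs_cvgZ; [exact: cvg_id | exact: cvg_cst].
  by move/(_ V (open_nbhs_nbhs (conj Vo VZ))).
have h2 : \forall d \near (0 : R^o), d * pi P < eta / 2.
  have hc : (fun d : R^o => d * pi P) @ (0 : R^o) --> (0 : R^o).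
    rewrite -[X in _ --> X](mul0r (pi P)); exact: (@cvgMr_tmp R R^o (nbhs (0 : R^o)) _ (fun d => d) 0 (pi P) cvg_id).
  have h3 : (0 : R^o) < eta / 2 by rewrite divr_gt0.
  have := cvgr_lt _ hc _ h3.
  by apply; typeclasses eauto.
have hI := @filterI R^o (nbhs (0:R^o)) (nbhs_filter _) _ _ h1 h2.
have [e /= e0 He] := proj1 (@nbhs_ballP R R^o 0 _) hI.
set d := e / 2.
have d0 : 0 < d by rewrite divr_gt0.
have [Vd hd] : V (Z + d *: P) /\ d * pi P < eta / 2.
  apply: He; rewrite -ball_normE /= sub0r normrN gtr0_norm //.
  rewrite /d; lra.
set Z2 := Z + d *: P.
have MZ2 : M Z2 by apply: MD => //; exact: MZ.
have piZ2 : pi Z2 = pi Z + d * pi P by rewrite piD // ?piZ //; exact: MZ.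
set g := fun Y => P + d^-1 *: (Y - X).
have gc : continuous g.
  move=> Y; apply: tvs_cvgD; first exact: cvg_cst.
  apply: tvs_cvgZ; first exact: cvg_cst.
  apply: tvs_cvgD; [exact: cvg_id | exact: cvg_cst].
exists ([set Y | (pos_cone le)° (g Y)] `&` [set Y | r X - eta / 2 < r Y]).
split.
- apply: openI.
  + apply: open_comp => [Y _|]; [exact: gc | exact: open_interior].
  + apply: (@open_comp E R^o r [set x : R^o | r X - eta / 2 < x]) => [Y _|]; [exact: rcont | exact: open_gt].
- split => /=; first by rewrite /g subrr scaler0 addr0.
  have : 0 < eta / 2 by rewrite divr_gt0.
  lra.
- move=> Y [gY rY]; exists Z2; split; last by split.
  split => //.
  + have -> : Y + Z2 = (X + Z) + d *: g Y.
      rewrite /g scalerDr scalerA mulfV ?gt_eqF // scale1r /Z2.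
      rewrite (addrC (d *: P)) !addrA; congr (_ + _).
      by rewrite addrAC (addrC X) addrK addrC.
    apply: Amono => //; rewrite /pos_cone /= -(scaler0 _ d).
    apply: leZ; [exact: ltW | exact: interior_subset].
  + rewrite rE -EFinD lte_fin piZ2.
    move: rY hd; rewrite /eta /= => rY hd; lra.
Qed.
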